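(* Let $\mathcal{G}=(\mathcal{V},\mathcal{E})$ be a finite, simple, connected graph with shortest-path metric $d_{\mathcal{G}}$, and let each node $i\in\mathcal{V}$ carry a feature vector $\mathbf{x}_i$. Let $\mathcal{M}\subseteq\mathbb{R}^d$ be a Riemannian submanifold with geodesic distance $d_{\mathcal{M}}$, and let $h$ be an injective embedding $i\mapsto h(\mathbf{x}_i)\in\mathcal{M}$ (distinct nodes map to distinct points). Let $\bm{w}\in\mathbb{R}^d$, $b\in\mathbb{R}$, and define the model $f=g\circ h$ with linear solver $g(\bm{z})=\langle \bm{w},\bm{z}\rangle+b$, so that $y_i=\langle \bm{w},h(\mathbf{x}_i)\rangle+b$ for each $i\in\mathcal{V}$. Define $$\delta_c(h)=\max_{i\neq j}\frac{d_{\mathcal{G}}(i,j)}{d_{\mathcal{M}}(h(\mathbf{x}_i),h(\mathbf{x}_j))},\qquad \delta_e(h)=\max_{i\neq j}\frac{d_{\mathcal{M}}(h(\mathbf{x}_i),h(\mathbf{x}_j))}{d_{\mathcal{G}}(i,j)},$$ $$\xi(h)=\min_{i\neq j}\frac{\|h(\mathbf{x}_i)-h(\mathbf{x}_j)\|}{d_{\mathcal{M}}(h(\mathbf{x}_i),h(\mathbf{x}_j))},\qquad \zeta(h)=\max_{i\neq j}\frac{\|h(\mathbf{x}_i)-h(\mathbf{x}_j)\|}{d_{\mathcal{M}}(h(\mathbf{x}_i),h(\mathbf{x}_j))},$$ $$\rho(h,\bm{w})=\min_{i\neq j}\frac{|\langle \bm{w},h(\mathbf{x}_i)-h(\mathbf{x}_j)\rangle|}{\|\bm{w}\|\,\|h(\mathbf{x}_i)-h(\mathbf{x}_j)\|},$$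 where all extrema range over pairs of distinct nodes $i,j\in\mathcal{V}$. If $\rho(h,\bm{w})>0$, then for all distinct $i,j\in\mathcal{V}$, $$\alpha\, d_{\mathcal{G}}(i,j)\le |y_i-y_j|\le \beta\, d_{\mathcal{G}}(i,j),\quad\text{with } \beta=\|\bm{w}\|\,\zeta(h)\,\delta_e(h),\ \ \alpha=\frac{\|\bm{w}\|\,\xi(h)\,\rho(h,\bm{w})}{\delta_c(h)}.$$
   Context: $\langle\cdot,\cdot\rangle$ and $\|\cdot\|$ denote the Euclidean inner product and norm of the ambient space $\mathbb{R}^d$. The quantity $\delta(h)=\delta_c(h)\delta_e(h)$ is called the embedding distortion. *)

(* Defs.v *)
From HB Require Import structures.
From mathcomp Require Import all_boot all_order all_algebra.
From mathcomp Require Import reals.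
Set Implicit Arguments. Unset Strict Implicit. Unset Printing Implicit Defensive.
Import Order.TTheory GRing.Theory Num.Theory.
Local Open Scope ring_scope.

Section Defs.
Variable R : realType.

Definition dotr (d : nat) (u v : 'rV[R]_d) : R := \sum_(k < d) u 0 k * v 0 k.
Definition enorm (d : nat) (u : 'rV[R]_d) : R := Num.sqrt (dotr u u).

(* A metric on the subset M of R^d (abstraction of the geodesic distance). *)
Definition is_metric_on (d : nat) (M : pred 'rV[R]_d)
  (dM : 'rV[R]_d -> 'rV[R]_d -> R) : Prop :=
  [/\ forall p q, M p -> M q -> 0 <= dM p q,
      forall p q, M p -> M q -> (dM p q = 0 <-> p = q),
      forall p q, M p -> M q -> dM p q = dM q p &
      forall p q r, M p -> M q -> M r -> dM p r <= dM p q + dM q r].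

Variable V : finType.

Definition pair_vals (F : V -> V -> R) : seq R :=
  [seq F p.1 p.2 | p <- enum [pred p : V * V | p.1 != p.2]].
(* max / min over pairs of distinct nodes (0 if there are no such pairs). *)
Definition max_pairs (F : V -> V -> R) : R :=
  let s := pair_vals F in foldr Num.max (head 0 s) s.
Definition min_pairs (F : V -> V -> R) : R :=
  let s := pair_vals F in foldr Num.min (head 0 s) s.
End Defs.

Definition walk_of_len (V : finType) (e : rel V) (n : nat) (x y : V) : bool :=
  [exists p : n.-tuple V, path e x p && (last x p == y)].

(* Length of a shortest walk from x to y (= #|V| if none, which cannot
   happen in a connected graph since shortest walks have length < #|V|). *)
Definition gdist (V : finType) (e : rel V) (x y : V) : nat :=
  \big[minn/#|V|]_(n < #|V|.+1 | walk_of_len e n x y) n.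

(* Main.v *)
Require Import Defs.
From HB Require Import structures.
From mathcomp Require Import all_boot all_order all_algebra.
From mathcomp Require Import reals.
From mathcomp Require Import ring lra.
Import Order.TTheory GRing.Theory Num.Theory.
Local Open Scope ring_scope.

Section Helpers.
Variable R : realType.

Lemma foldr_max_ge (s : seq R) x0 x : x \in s -> x <= foldr Num.max x0 s.
Proof.
elim: s => //= a s IH; rewrite in_cons => /orP [/eqP-> | /IH H].
  by rewrite le_max lexx.
by rewrite le_max H orbT.
Qed.

Lemma foldr_min_le (s : seq R) x0 x : x \in s -> foldr Num.min x0 s <= x.
Proof.
elim: s => //= a s IH; rewrite in_cons => /orP [/eqP-> | /IH H].
  by rewrite ge_min lexx.
by rewrite ge_min H orbT.
Qed.

Lemma foldr_min_ge0 (s : seq R) x0 : 0 <= x0 -> all (fun x => 0 <= x) s ->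
  0 <= foldr Num.min x0 s.
Proof.
elim: s => //= a s IH H0 /andP[ha hs]; by rewrite le_min ha IH.
Qed.

Variable V : finType.

Lemma pair_in (F : V -> V -> R) i j : i != j -> F i j \in pair_vals F.
Proof.
move=> ij; rewrite /pair_vals; apply/mapP; exists (i, j) => //.
by rewrite mem_enum inE.
Qed.

Lemma max_pairs_ge (F : V -> V -> R) i j : i != j -> F i j <= max_pairs F.
Proof. by move=> ij; rewrite /max_pairs; apply: foldr_max_ge; apply: pair_in. Qed.

Lemma min_pairs_le (F : V -> V -> R) i j : i != j -> min_pairs F <= F i j.
Proof. by move=> ij; rewrite /min_pairs; apply: foldr_min_le; apply: pair_in. Qed.

Lemma min_pairs_ge0 (F : V -> V -> R) :
  (forall i j, i != j -> 0 <= F i j) -> 0 <= min_pairs F.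
Proof.
move=> H.
have Hall : all (fun x => 0 <= x) (pair_vals F).
  apply/allP => x /mapP [[a b]]; rewrite mem_enum inE /= => hab ->; exact: H.
rewrite /min_pairs /=; move: Hall; case: (pair_vals F) => [|a s] //= /andP[ha hs].
by rewrite le_min ha foldr_min_ge0.
Qed.

Lemma cs d (u v : 'rV[R]_d) : `|dotr u v| <= enorm u * enorm v.
Proof.
have E : forall A C : R, \sum_(k < d) (A * v 0 k - C * u 0 k) ^+ 2 =
   A ^+ 2 * dotr v v - 2 * A * C * dotr u v + C ^+ 2 * dotr u u.
  move=> A C; rewrite /dotr.
  transitivity (\sum_(k < d) (A ^+ 2 * (v 0 k * v 0 k) - (2 * A * C) * (u 0 k * v 0 k)
      + C ^+ 2 * (u 0 k * u 0 k))).
    by apply: eq_bigr => k _; ring.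
  by rewrite !big_split /= sumrN -!mulr_sumr.
have A0 : 0 <= dotr u u by apply: sumr_ge0 => k _; rewrite -expr2 sqr_ge0.
have B0 : 0 <= dotr v v by apply: sumr_ge0 => k _; rewrite -expr2 sqr_ge0.
have key : dotr u v ^+ 2 <= dotr u u * dotr v v.
  have [Ap|] := ltrP 0 (dotr u u).
    have := E (dotr u u) (dotr u v).
    have P : 0 <= \sum_(k < d) (dotr u u * v 0 k - dotr u v * u 0 k) ^+ 2.
      by apply: sumr_ge0 => k _; rewrite sqr_ge0.
    move=> EE; rewrite EE in P.
    move: P Ap B0; set A := dotr u u; set B := dotr v v; set C := dotr u v => P Ap B0.
    nra.
  move=> Ale; have A00 : dotr u u = 0 by apply/eqP; rewrite eq_le Ale A0.
  have uk : forall k, u 0 k = 0.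
    have hge : forall k, 0 <= u 0 k * u 0 k by move=> k; rewrite -expr2 sqr_ge0.
    move=> k; have := @psumr_eq0P R _ predT (fun k => u 0 k * u 0 k) (fun k _ => hge k) A00 k isT.
    by move/eqP; rewrite mulf_eq0 orbb => /eqP.
  have C0 : dotr u v = 0 by rewrite /dotr big1 // => k _; rewrite uk mul0r.
  by rewrite C0 A00 expr0n /= mul0r.
rewrite /enorm -sqrtrM // -sqrtr_sqr; exact: ler_wsqrtr.
Qed.

End Helpers.

Lemma gdist_pos (V : finType) (e : rel V) i j : i != j -> (0 < gdist e i j)%N.
Proof.
move=> ij; rewrite /gdist; apply: (big_ind (fun x => 0 < x)%N).
- by apply/card_gt0P; exists i.
- by move=> x y hx hy; rewrite leq_min hx hy.
- move=> [[|n] hn] //= /existsP [p /andP [_ /eqP hl]].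
  move: hl; have -> : val p = [::] by apply: size0nil; rewrite size_tuple.
  by move=> /= hij; rewrite hij eqxx in ij.
Qed.

Theorem theorem4p1 (R : realType) (V : finType) (e : rel V)
  (e_sym : symmetric e) (e_irr : irreflexive e)
  (e_conn : forall i j : V, connect e i j)
  (X : Type) (feat : V -> X) (d : nat)
  (M : pred 'rV[R]_d) (dM : 'rV[R]_d -> 'rV[R]_d -> R)
  (dM_metric : is_metric_on M dM)
  (h : X -> 'rV[R]_d) (h_in_M : forall i : V, M (h (feat i)))
  (h_inj : injective (fun i : V => h (feat i)))
  (w : 'rV[R]_d) (b : R) :
  let z := fun i : V => h (feat i) in
  let y := fun i : V => dotr w (z i) + b in
  let dG := fun i j : V => ((gdist e i j)%:R : R) in
  let delta_c := max_pairs (fun i j => dG i j / dM (z i) (z j)) in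
  let delta_e := max_pairs (fun i j => dM (z i) (z j) / dG i j) in
  let xi := min_pairs (fun i j => enorm (z i - z j) / dM (z i) (z j)) in
  let zeta := max_pairs (fun i j => enorm (z i - z j) / dM (z i) (z j)) in
  let rho := min_pairs (fun i j =>
               `|dotr w (z i - z j)| / (enorm w * enorm (z i - z j))) in
  let beta := enorm w * zeta * delta_e in
  let alpha := enorm w * xi * rho / delta_c in
  0 < rho ->
  forall i j : V, i != j ->
    alpha * dG i j <= `|y i - y j| <= beta * dG i j.
Proof.
move=> z y dG delta_c delta_e xi zeta rho beta alpha rho0 i j ij.
case: dM_metric => dM0 dMeq _ _.
have D0 : 0 < dG i j by rewrite /dG ltr0n gdist_pos.
have m0 : 0 < dM (z i) (z j).
  rewrite lt0r dM0 ?h_in_M // ?andbT; apply/eqP => /dMeq H.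
  by move: ij; rewrite (h_inj i j (H (h_in_M i) (h_in_M j))) eqxx.
have Hyd : y i - y j = dotr w (z i - z j).
  rewrite /y /dotr; set s1 := \sum_(k < d) _; set s2 := \sum_(k < d) _.
  have -> : \sum_(k < d) w 0 k * (z i - z j) 0 k = s1 - s2.
    by rewrite /s1 /s2 -sumrB; apply: eq_bigr => k _; rewrite !mxE; ring.
  ring.
rewrite Hyd.
have Hrho : rho <= `|dotr w (z i - z j)| / (enorm w * enorm (z i - z j)).
  exact: (@min_pairs_le _ _ (fun i j =>
               `|dotr w (z i - z j)| / (enorm w * enorm (z i - z j))) _ _ ij).
move: Hrho; set c := dotr w (z i - z j); set n := enorm (z i - z j);
  set m := dM (z i) (z j); set D := dG i j => Hrho.
have w0 : 0 <= enorm w by apply: sqrtr_ge0.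
have n0 : 0 <= n by apply: sqrtr_ge0.
have wn : 0 < enorm w * n.
  rewrite lt0r mulr_ge0 // ?andbT; apply/eqP => H.
  by move: Hrho; rewrite H invr0 mulr0 => H'; have := lt_le_trans rho0 H'; rewrite ltxx.
have Hrho' : rho * (enorm w * n) <= `|c| by rewrite -ler_pdivlMr.
have hz : n / m <= zeta.
  exact: (@max_pairs_ge _ _ (fun i j => enorm (z i - z j) / dM (z i) (z j)) _ _ ij).
have he : m / D <= delta_e.
  exact: (@max_pairs_ge _ _ (fun i j => dM (z i) (z j) / dG i j) _ _ ij).
have hxi : xi <= n / m.
  exact: (@min_pairs_le _ _ (fun i j => enorm (z i - z j) / dM (z i) (z j)) _ _ ij).
have hdc : D / m <= delta_c.
  exact: (@max_pairs_ge _ _ (fun i j => dG i j / dM (z i) (z j)) _ _ ij).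
have xi0 : 0 <= xi.
  apply: min_pairs_ge0 => a a' _; apply: divr_ge0; [exact: sqrtr_ge0|apply: dM0; apply: h_in_M].
have ccs : `|c| <= enorm w * n by apply: cs.
rewrite ler_pdivrMr // in hz; rewrite ler_pdivrMr // in he.
rewrite ler_pdivlMr // in hxi; rewrite ler_pdivrMr // in hdc.
have zeta0 : 0 <= zeta by rewrite -(pmulr_lge0 _ m0); exact: le_trans n0 hz.
have dc0 : 0 < delta_c by rewrite -(pmulr_lgt0 _ m0); exact: lt_le_trans D0 hdc.
apply/andP; split.
  rewrite /alpha.
  have Dle : D / delta_c <= m by rewrite ler_pdivrMr // mulrC.
  have K0 : 0 <= enorm w * xi * rho by rewrite !mulr_ge0 // ltW.
  have -> : enorm w * xi * rho / delta_c * D = enorm w * xi * rho * (D / delta_c)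
    by rewrite mulrAC -mulrA.
  apply: (le_trans (y := enorm w * xi * rho * m)); first exact: ler_wpM2l.
  apply: le_trans Hrho'.
  have r0 : 0 <= rho by exact: ltW.
  have : enorm w * rho * (xi * m) <= enorm w * rho * n.
    by apply: ler_wpM2l => //; rewrite mulr_ge0.
  move=> H; apply: le_trans (le_trans _ H) _; [by rewrite le_eqVlt; apply/orP; left; apply/eqP; ring|].
  by rewrite le_eqVlt; apply/orP; left; apply/eqP; ring.
rewrite /beta; apply: le_trans ccs _.
rewrite -!mulrA; apply: ler_wpM2l => //.
apply: (le_trans (y := zeta * m)); first exact: hz.
exact: ler_wpM2l.
Qed.
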